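(* For every integer $n\ge 1$, let $M_F(n)$ denote the maximum modulus of an independence root over all forests on $n$ vertices. Then $$M_F(n)\le \begin{cases} 2^{\frac{n-1}{2}}+\frac{n-1}{2} & \text{if } n \text{ is odd},\\ 2^{\frac{n-2}{2}}+\frac{n}{2} & \text{if } n \text{ is even}.\end{cases}$$
   Context: For a finite simple graph $G$, the independence polynomial is $i(G,x)=\sum_{k=0}^{\alpha(G)} i_k x^k$, where $i_k$ is the number of independent sets of size $k$ in $G$ (with $i_0=1$) and $\alpha(G)$ is the independence number. Its complex roots are the independence roots of $G$. A forest is an acyclic graph. *)

(* Defs.v *)
From HB Require Import structures.
From mathcomp Require Import all_boot all_order all_algebra.
From mathcomp Require Import algC.
Set Implicit Arguments. Unset Strict Implicit. Unset Printing Implicit Defensive.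
Import Order.TTheory GRing.Theory Num.Theory.

Definition simple_graph (T : finType) (e : rel T) : Prop :=
  symmetric e /\ irreflexive e.

Definition forest (T : finType) (e : rel T) : Prop :=
  forall s : seq T, uniq s -> 3 <= size s -> ~~ cycle e s.

Definition independent (T : finType) (e : rel T) (S : {set T}) : bool :=
  [forall x in S, forall y in S, ~~ e x y].

Definition indep_count (T : finType) (e : rel T) (k : nat) : nat :=
  #|[set S : {set T} | independent e S & #|S| == k]|.

(* independence polynomial i(G,x) = sum_k i_k x^k (independent sets have
   size at most #|T|, so coefficients beyond #|T| vanish) *)
Definition indep_poly (R : nzRingType) (T : finType) (e : rel T) : {poly R} :=
  (\poly_(k < #|T|.+1) (indep_count e k)%:R)%R.

Local Open Scope ring_scope.

Definition forest_bound (n : nat) : algC :=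
  if odd n then 2 ^+ n./2 + (n./2)%:R
  else 2 ^+ (n.-2)./2 + (n./2)%:R.

(* Main.v *)
Require Import Defs.
From HB Require Import structures.
From mathcomp Require Import all_boot all_order all_algebra.
From mathcomp Require Import algC.
From mathcomp Require Import zify.
From Stdlib Require Import Classical.
Set Implicit Arguments. Unset Strict Implicit. Unset Printing Implicit Defensive.
Import Order.TTheory GRing.Theory Num.Theory.

Section G.
Variables (T : finType) (e : rel T).
Hypothesis esym : symmetric e.
Hypothesis eirr : irreflexive e.

Lemma indepP (S : {set T}) :
  reflect (forall x y, x \in S -> y \in S -> ~~ e x y) (independent e S).
Proof.
apply: (iffP forallP) => [H x y xS yS | H x].
  by have /implyP/(_ xS)/forallP/(_ y)/implyP/(_ yS) := H x.
by apply/implyP => xS; apply/forallP => y; apply/implyP => yS; apply: H.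
Qed.

Lemma indep_sub (S S' : {set T}) : S' \subset S -> independent e S -> independent e S'.
Proof.
move=> sub /indepP H; apply/indepP => x y xS yS; apply: H; exact: (subsetP sub).
Qed.

Lemma indep_add (S : {set T}) v : independent e S -> (forall x, x \in S -> ~~ e v x) ->
  independent e (v |: S).
Proof.
move=> /indepP H Hv; apply/indepP => x y; rewrite !inE.
case/orP=> [/eqP->|xS]; case/orP=> [/eqP->|yS].
- by rewrite eirr.
- exact: Hv.
- by rewrite esym; apply: Hv.
- exact: H.
Qed.

Definition cnt (U : {set T}) k :=
  #|[set S : {set T} | [&& S \subset U, independent e S & #|S| == k]]|.

Definition hasind (U : {set T}) k :=
  exists S : {set T}, [/\ S \subset U, independent e S & k < #|S|].

Lemma sub_card (S : {set T}) k : k <= #|S| -> exists S' : {set T}, S' \subset S /\ #|S'| = k.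
Proof.
move/card_geqP=> [s [us sz ss]].
exists [set x in s]; split.
  by apply/subsetP => x; rewrite inE => /ss.
by rewrite cardsE (card_uniqP us).
Qed.

Lemma cnt_pos (U : {set T}) k : hasind U k -> 0 < cnt U k.+1.
Proof.
move=> [S [SU iS kS]]; have [S' [S'S cS']] := sub_card kS.
apply/card_gt0P; exists S'; rewrite inE cS' eqxx andbT.
by rewrite (subset_trans S'S SU) (indep_sub S'S iS).
Qed.

Lemma cnt_gt0 (U : {set T}) k : 0 < cnt U k -> exists S : {set T}, [/\ S \subset U, independent e S & #|S| = k].
Proof.
by move/card_gt0P=> [S]; rewrite inE => /and3P[a b /eqP c]; exists S.
Qed.

Lemma cnt0 (U : {set T}) : cnt U 0 = 1.
Proof.
rewrite /cnt -(cards1 (set0 : {set T})); apply: eq_card => S.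
rewrite !inE cards_eq0; case: eqP => [->|]; rewrite ?andbF //.
rewrite sub0set andbT /=; apply/forallP => x; by rewrite inE.
Qed.

Lemma cnt_big (U : {set T}) k : #|U| < k -> cnt U k = 0.
Proof.
move=> H; apply/eqP; rewrite -leqn0 leqNgt; apply/negP => /cnt_gt0 [S [SU _ cS]].
by move: (subset_leq_card SU); rewrite cS leqNgt H.
Qed.

Definition rest (U : {set T}) u := [set x in U | (x != u) && ~~ e u x].

Lemma rest_notin (U : {set T}) u : u \notin rest U u.
Proof. by rewrite inE eqxx andbF. Qed.

Lemma notin_sub (S U : {set T}) u : S \subset U -> u \notin U -> u \notin S.
Proof. by move=> SU; apply: contraNN => /(subsetP SU). Qed.

Lemma cnt_split (U : {set T}) u k : u \in U ->
  cnt U k.+1 = cnt (U :\ u) k.+1 + cnt (rest U u) k.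
Proof.
move=> uU.
set X := [set S : {set T} | [&& S \subset U, independent e S & #|S| == k.+1]].
rewrite /cnt -/X -(cardID [set S : {set T} | u \in S] X) addnC.
congr (_ + _).
  apply: eq_card => S; rewrite !inE subsetD1.
  by case: (S \subset U); case: (u \in S); rewrite ?andbF.
set C := [set S : {set T} | [&& S \subset rest U u, independent e S & #|S| == k]].
have inj : {in C &, injective (fun S : {set T} => u |: S)}.
  move=> S1 S2; rewrite !inE => /and3P[s1 _ _] /and3P[s2 _ _] H.
  have n1 := notin_sub s1 (rest_notin U u).
  have n2 := notin_sub s2 (rest_notin U u).
  by rewrite -(setU1K n1) -(setU1K n2) H.
rewrite -(card_in_imset inj); apply: eq_card => S; rewrite !inE.
apply/andP/imsetP.
  move=> [/and3P[SU iS /eqP cS] uS]; exists (S :\ u); last by rewrite setD1K.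
  rewrite inE; apply/and3P; split.
  - apply/subsetP => x; rewrite !inE => /andP[xu xS]; rewrite xu (subsetP SU) //=.
    by move/indepP: iS => /(_ u x uS xS).
  - apply: indep_sub iS; exact: subD1set.
  - by move: cS; rewrite (cardsD1 u S) uS add1n => -[->].
move=> [S' ]; rewrite inE => /and3P[S'r iS' /eqP cS'] ->.
have n1 := notin_sub S'r (rest_notin U u).
rewrite setU11; split=> //; apply/and3P; split.
- apply/subsetP => x; rewrite !inE => /orP[/eqP->//|/(subsetP S'r)]; by rewrite inE => /andP[].
- apply: indep_add => // x /(subsetP S'r); by rewrite inE => /and3P[].
- by rewrite cardsU1 n1 cS'.
Qed.

Lemma rest_iso (U : {set T}) v : (forall x, x \in U -> ~~ e v x) -> rest U v = U :\ v.
Proof.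
move=> H; apply/setP => x; rewrite !inE andbC.
by case xU: (x \in U); rewrite ?andbF //= H // andbT.
Qed.

End G.

Section G.
Variables (T : finType) (e : rel T).
Hypothesis esym : symmetric e.
Hypothesis eirr : irreflexive e.
Hypothesis efor : forest e.

Lemma cyc_contra (y p : T) r w : uniq [:: y, p & r] -> path e y (p :: r) -> w \in r ->
  e w y -> False.
Proof.
move=> u pa wr ewy.
set i := index w r.
have ir : i < size r by rewrite index_mem.
have := efor (s := take i.+3 [:: y, p & r]).
rewrite take_uniq // size_take /=.
have -> : 2 < (if i.+3 < (size r).+2 then i.+3 else (size r).+2) by case: ifP => // _; rewrite !ltnS (leq_ltn_trans (leq0n i) ir).
move=> /(_ isT isT) /negP; apply.
move: pa => /= /andP [-> pa] /=.
rewrite rcons_path (take_path i.+1 pa) /= (take_nth y ir) last_rcons nth_index //.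
Qed.

Lemma struct (U : {set T}) : U != set0 ->
  (exists v, v \in U /\ forall x, x \in U -> ~~ e v x) \/
  (exists v u, [/\ v \in U, u \in U, e v u & forall w, w \in U -> e v w -> w = u]).
Proof.
move=> /set0Pn [x0 x0U].
apply: NNPP => H.
have H1 : forall v, v \in U -> exists2 x, x \in U & e v x.
  move=> v vU; apply: NNPP => nx; apply: H; left; exists v; split=> // x xU.
  by apply/negP => evx; apply: nx; exists x.
have H2 : forall v u, v \in U -> u \in U -> e v u -> exists2 w, w \in U & e v w /\ w <> u.
  move=> v u vU uU evu; apply: NNPP => nw; apply: H; right; exists v, u; split=> // w wU evw.
  by apply: NNPP => wu; apply: nw; exists w.
have L : forall n, exists y p r, [/\ uniq [:: y, p & r], path e y (p :: r),
    all (mem U) [:: y, p & r] & n <= size r].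
  elim=> [|n [y [p [r [un pa al sz]]]]].
    have [y yU exy] := H1 _ x0U.
    exists y, x0, [::]; split=> //=.
    - by rewrite andbT inE; apply/eqP => yx; move: exy; rewrite yx eirr.
    - by rewrite andbT esym.
    - by rewrite yU x0U.
  have /= /and3P [yU pU _] := al.
  have [w wU [eyw wp]] := H2 y p yU pU (andP pa).1.
  case wr : (w \in r).
    exfalso; apply: (cyc_contra un pa wr); by rewrite esym.
  exists w, y, (p :: r); split=> //=.
  - move: un => /= ->; rewrite !andbT !inE wr orbF negb_or; apply/andP; split.
      by apply/eqP => wy; move: eyw; rewrite wy eirr.
    by apply/eqP.
  - by move: pa => /= ->; rewrite esym eyw.
  - by move: al => /= ->; rewrite wU.
have [y [p [r [un _ _ sz]]]] := L #|T|.
have := max_card (mem [:: y, p & r]).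
by rewrite (card_uniqP un) /= ltnNge ltnW.
Qed.

End G.

Definition g N := if N is 0 then 0 else
  if odd N then 2 ^ N./2 + N./2 else 2 ^ (N.-2)./2 + N./2.

Lemma gO m : g m.*2.+1 = 2 ^ m + m.
Proof. by rewrite /g /= odd_double /= uphalf_double. Qed.

Lemma gE m : g m.*2.+2 = 2 ^ m + m.+1.
Proof. by rewrite /g /= odd_double /= half_double. Qed.

Lemma parity N : exists m, N = m.*2 \/ N = m.*2.+1.
Proof.
elim: N => [|N [m [->|->]]]; [by exists 0; left | by exists m; right | by exists m.+1; left; rewrite doubleS].
Qed.

Lemma exp_pos m : 0 < 2 ^ m. Proof. by rewrite expn_gt0. Qed.

Lemma g_step N : g N + 1 <= g N.+1.
Proof.
have [m [->|->]] := parity N.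
  case: m => [|m]; first by [].
  rewrite doubleS gE -doubleS gO expnS; have := exp_pos m; lia.
by rewrite gO gE; lia.
Qed.

Lemma g_mono M N : M <= N -> g M <= g N.
Proof.
move=> /subnK <-; elim: (N - M) => [|k IH]; first by [].
rewrite addSn; apply: leq_trans IH _; have := g_step (k + M); lia.
Qed.

Lemma g_step2 N : g N + 1 <= g N.+2.
Proof. have := g_step N; have := g_step N.+1; lia. Qed.

Lemma g_leaf M N : M.+3 <= N -> g N.-2 + 1 + 2 ^ M./2 <= g N.
Proof.
have [m [->|->]] := parity N => H.
  case: m H => [|[|m]] H //.
  have h : M./2 <= m.
    by rewrite leq_half_double; move: H; rewrite !doubleS; lia.
  rewrite !doubleS /= odd_double half_double /=.
  have := leq_pexp2l (isT : 0 < 2) h; rewrite !expnS; lia.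
case: m H => [|m] H //.
have h : M./2 <= m.
  by rewrite leq_half_double; move: H; rewrite !doubleS; lia.
have -> : (m.+1.*2.+1).-2 = m.*2.+1 by rewrite doubleS.
rewrite !gO.
have := leq_pexp2l (isT : 0 < 2) h; rewrite !expnS; lia.
Qed.

Lemma half_step N : 1 < N -> 2 * 2 ^ (N.-2)./2 <= 2 ^ N./2.
Proof.
case: N => [|[|N]] //= _; rewrite -expnS; apply: leq_pexp2l => //.
Qed.

Lemma g_pos N : 0 < N -> 0 < g N.
Proof. case: N => // N _; have := g_step N; lia. Qed.

Section G.
Variables (T : finType) (e : rel T).
Hypothesis esym : symmetric e.
Hypothesis eirr : irreflexive e.
Hypothesis efor : forest e.

Lemma hasind_sub (X Y : {set T}) k : X \subset Y -> hasind e X k -> hasind e Y k.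
Proof. move=> XY [S [SX iS kS]]; exists S; split=> //; exact: subset_trans XY. Qed.

Lemma hasind_le (X : {set T}) k : hasind e X k.+1 -> hasind e X k.
Proof. move=> [S [SX iS kS]]; exists S; split=> //; exact: ltnW. Qed.

Lemma hasind_del (X : {set T}) v k : hasind e X k.+1 -> hasind e (X :\ v) k.
Proof.
move=> [S [SX iS kS]]; exists (S :\ v); split.
- by apply: setSD.
- by apply: indep_sub iS; apply: subD1set.
- by move: kS; rewrite (cardsD1 v S); case: (v \in S) => /=; lia.
Qed.

Lemma hasind_add (X : {set T}) v k : v \notin X -> (forall x, x \in X -> ~~ e v x) ->
  hasind e X k -> hasind e (v |: X) k.+1.
Proof.
move=> vX Hv [S [SX iS kS]]; exists (v |: S); split.
- by apply: setUS.
- by apply: indep_add => // x /(subsetP SX); apply: Hv.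
- by rewrite cardsU1 (notin_sub SX vX).
Qed.

Lemma no_ext (W X : {set T}) v k : v \in W -> X \subset W :\ v ->
  (forall x, x \in X -> ~~ e v x) -> ~ hasind e W k.+1 -> ~ hasind e X k.
Proof.
move=> vW XW Hv nW hX; apply: nW.
apply: (@hasind_sub (v |: X)).
  apply/subsetP => x; rewrite !inE => /orP[/eqP->//|/(subsetP XW)].
  by rewrite !inE => /andP[].
apply: hasind_add => //.
by apply: (notin_sub XW); rewrite !inE eqxx.
Qed.

Lemma cnt_zero (X : {set T}) k : ~ hasind e X k -> cnt e X k.+1 = 0.
Proof.
move=> nX; apply/eqP; rewrite -leqn0 leqNgt; apply/negP => /cnt_gt0 [S [SX iS cS]].
by apply: nX; exists S; rewrite cS.
Qed.

Lemma card_del (X : {set T}) v : v \in X -> #|X :\ v| = #|X|.-1.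
Proof. by move=> vX; rewrite (cardsD1 v X) vX. Qed.

Lemma mis_aux n : forall W : {set T}, #|W| <= n -> forall k, ~ hasind e W k ->
  cnt e W k <= 2 ^ (#|W|./2).
Proof.
elim: n => [|n IH] W Wn [|j] nW; rewrite ?cnt0 ?exp_pos //.
  by rewrite cnt_big //; move: Wn; rewrite leqn0 => /eqP->.
case: (eqVneq W set0) => [->|Wne]; first by rewrite cnt_big // cards0.
have [[v [vW Hv]]|[v [u [vW uW evu Hu]]]] := struct esym eirr efor Wne.
  rewrite (cnt_split esym eirr _ vW) (rest_iso Hv).
  have nW' : ~ hasind e (W :\ v) j.
    by apply: (no_ext vW) => // x; rewrite inE => /andP[_ /Hv].
  rewrite (cnt_zero nW') add0n.
  have c1 := card_del vW.
  apply: leq_trans (IH _ _ _ nW') _.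
    by rewrite c1; move: Wn; case: #|W| => //.
  by apply: leq_pexp2l => //; apply: half_leq; rewrite c1 leq_pred.
have uv : u != v by apply/eqP => uv; move: evu; rewrite uv eirr.
have vA : v \in W :\ u by rewrite !inE eq_sym uv.
have HvA : forall x, x \in W :\ u -> ~~ e v x.
  move=> x; rewrite !inE => /andP[xu xW]; apply/negP => evx.
  by move: xu; rewrite (Hu x xW evx) eqxx.
rewrite (cnt_split esym eirr _ uW) (cnt_split esym eirr _ vA) (rest_iso HvA).
have sub1 : (W :\ u) :\ v \subset W :\ v.
  by apply/subsetP => x; rewrite !inE => /and3P[-> _ ->].
have Hv1 : forall x, x \in (W :\ u) :\ v -> ~~ e v x.
  by move=> x; rewrite inE => /andP[_ /HvA].
have nA : ~ hasind e ((W :\ u) :\ v) j by apply: (no_ext vW sub1 Hv1 nW).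
have subB : rest e W u \subset (W :\ u) :\ v.
  apply/subsetP => x; rewrite !inE => /and3P[xW xu eux]; rewrite xW xu !andbT.
  by apply/eqP => xv; move: eux; rewrite xv esym evu.
have nB : ~ hasind e (rest e W u) j by move=> h; apply: nA; apply: hasind_sub h.
rewrite (cnt_zero nA) add0n.
have cA : #|(W :\ u) :\ v| = #|W|.-2 by rewrite (card_del vA) (card_del uW).
have cB : #|rest e W u| <= #|W|.-2 by rewrite -cA; apply: subset_leq_card.
have W2 : 1 < #|W|.
  have : #|[set u; v]| <= #|W|.
    by apply: subset_leq_card; apply/subsetP => x; rewrite !inE => /orP[]/eqP->.
  by rewrite cards2 uv.
have Wn' : #|W|.-2 <= n by move: Wn; case: #|W| => [|[|?]] //=; lia.
have cAn : #|(W :\ u) :\ v| <= n by rewrite cA.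
have e1 := IH _ cAn _ nA.
have e2 := IH _ (leq_trans cB Wn') _ nB.
have h1 : 2 ^ (#|(W :\ u) :\ v|./2) <= 2 ^ ((#|W|.-2)./2) by rewrite cA.
have h2 : 2 ^ (#|rest e W u|./2) <= 2 ^ ((#|W|.-2)./2).
  by apply: leq_pexp2l => //; apply: half_leq.
have h3 := half_step W2.
lia.
Qed.

End G.

Section G.
Variables (T : finType) (e : rel T).
Hypothesis esym : symmetric e.
Hypothesis eirr : irreflexive e.
Hypothesis efor : forest e.

Lemma iso_step (X : {set T}) v F : v \in X -> (forall x, x \in X -> ~~ e v x) ->
  (forall k, hasind e (X :\ v) k -> cnt e (X :\ v) k <= F * cnt e (X :\ v) k.+1) ->
  forall j, hasind e X j.+1 -> cnt e X j.+1 <= F.+1 * cnt e X j.+2.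
Proof.
move=> vX Hv IH j hX.
rewrite !(cnt_split esym eirr _ vX) (rest_iso Hv).
have h0 := IH _ (hasind_del v hX).
case: (classic (hasind e (X :\ v) j.+1)) => [h1|_].
  have := IH _ h1; nia.
nia.
Qed.

Lemma hasind_swap (U : {set T}) v u k : u \in U -> v \in U -> e v u ->
  (forall w, w \in U -> e v w -> w = u) -> hasind e U k -> hasind e (U :\ u) k.
Proof.
move=> uU vU evu Hu [S [SU iS kS]].
case uS: (u \in S).
  have vS : v \notin S by apply/negP => vS; move/indepP: iS => /(_ v u vS uS); rewrite evu.
  have uv : v != u by apply/eqP => vu; move: evu; rewrite vu eirr.
  exists (v |: (S :\ u)); split.
  - apply/subsetP => x; rewrite !inE => /orP[/eqP->|/andP[xu /(subsetP SU)->]].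
      by rewrite uv vU.
    by rewrite xu.
  - apply: indep_add => //; first by apply: indep_sub iS; apply: subD1set.
    move=> x; rewrite !inE => /andP[xu xS]; apply/negP => evx.
    by move: xu; rewrite (Hu x (subsetP SU x xS) evx) eqxx.
  - rewrite cardsU1 !inE negb_and vS orbT /=.
    by move: kS; rewrite (cardsD1 u S) uS.
exists S; split=> //.
apply/subsetP => x xS; rewrite !inE (subsetP SU x xS) andbT.
by apply/eqP => xu; move: uS; rewrite -xu xS.
Qed.

Lemma main_aux n : forall U : {set T}, #|U| <= n -> forall k, hasind e U k ->
  cnt e U k <= g #|U| * cnt e U k.+1.
Proof.
elim: n => [|n IH] U Un k hU.
  exfalso; move: hU => [S [SU _ kS]]; move: (subset_leq_card SU) Un; lia.
have U0 : 0 < #|U|.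
  by move: hU => [S [SU _ kS]]; move: (subset_leq_card SU); lia.
case: k hU => [|j] hU.
  rewrite cnt0; have := cnt_pos hU; have := g_pos U0; nia.
have Une : U != set0 by rewrite -card_gt0.
have [[v [vU Hv]]|[v [u [vU uU evu Hu]]]] := struct esym eirr efor Une.
  have c1 := card_del vU.
  have IH' : forall k, hasind e (U :\ v) k ->
      cnt e (U :\ v) k <= g #|U :\ v| * cnt e (U :\ v) k.+1.
    by apply: IH; rewrite c1; move: Un; lia.
  apply: leq_trans (iso_step vU Hv IH' hU) _.
  apply: leq_mul => //; rewrite c1; case: #|U| U0 => // m _; rewrite succnK; have := g_step m; lia.
have uv : u != v by apply/eqP => uv; move: evu; rewrite uv eirr.
have vA : v \in U :\ u by rewrite !inE eq_sym uv.
have HvA : forall x, x \in U :\ u -> ~~ e v x.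
  move=> x; rewrite !inE => /andP[xu xW]; apply/negP => evx.
  by move: xu; rewrite (Hu x xW evx) eqxx.
have cA : #|(U :\ u) :\ v| = #|U|.-2 by rewrite (card_del vA) (card_del uU).
have U2 : 1 < #|U|.
  have : #|[set u; v]| <= #|U|.
    by apply: subset_leq_card; apply/subsetP => x; rewrite !inE => /orP[]/eqP->.
  by rewrite cards2 uv.
have IHA : forall k, hasind e ((U :\ u) :\ v) k ->
    cnt e ((U :\ u) :\ v) k <= g #|U|.-2 * cnt e ((U :\ u) :\ v) k.+1.
  by rewrite -cA; apply: IH; rewrite cA; move: Un; lia.
have hA : hasind e (U :\ u) j.+1 by apply: (hasind_swap uU vU evu Hu).
have eA := iso_step vA HvA IHA hA.
have subB : rest e U u \subset (U :\ u) :\ v.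
  apply/subsetP => x; rewrite !inE => /and3P[xW xu eux]; rewrite xW xu !andbT.
  by apply/eqP => xv; move: eux; rewrite xv esym evu.
have cB : #|rest e U u| <= #|U|.-2 by rewrite -cA; apply: subset_leq_card.
have gA := g_step2 #|U|.-2.
have U2' : (#|U|.-2).+2 = #|U| by move: U2; case: #|U| => [|[|?]].
rewrite U2' in gA.
rewrite !(cnt_split esym eirr _ uU).
case: (classic (hasind e (rest e U u) j)) => [hB|nB].
  have cBn : #|rest e U u| <= n by move: cB Un; lia.
  have eB := IH _ cBn _ hB.
  have gB : g #|rest e U u| <= g #|U| by apply: g_mono; move: cB; lia.
  nia.
have eB := mis_aux esym eirr efor (leqnn _) nB.
have pA := cnt_pos hA.
have hA' : hasind e ((U :\ u) :\ v) j := hasind_del v hA.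
have pB : #|rest e U u| < #|(U :\ u) :\ v|.
  rewrite ltn_neqAle subset_leq_card // andbT; apply/negP => /eqP cc.
  apply: nB; apply: hasind_sub hA'.
  have /eqP -> : rest e U u == (U :\ u) :\ v by rewrite eqEcard subB cc leqnn.
  by [].
have gL := @g_leaf #|rest e U u| #|U| ltac:(move: pB; rewrite cA; move: U2; lia).
nia.
Qed.

End G.

Section EKsec.
Local Open Scope ring_scope.

Lemma EK (p : {poly algC}) (rho z : algC) : p != 0 -> (forall i, 0 <= p`_i) -> 0 <= rho ->
  (forall i, (i < (size p).-1)%N -> p`_i <= rho * p`_i.+1) -> root p z -> `|z| <= rho.
Proof.
move=> p0 pge rge prat /eqP pz.
set t := `|z|.
rewrite real_leNgt ?ger0_real ?normr_ge0 //; apply/negP => rt.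
have t0 : 0 < t by apply: le_lt_trans rt.
set d := (size p).-1.
have sp : size p = d.+1 by rewrite /d prednK // size_poly_gt0.
set q := p * ('X - rho%:P).
have sq : size q = d.+2 by rewrite /q size_Mmonic ?monicXsubC // size_XsubC sp addn2.
have qc : forall i, q`_i = (if i == 0%N then 0 else p`_i.-1) - p`_i * rho.
  by move=> i; rewrite /q mulrBr coefB coefMX coefMC.
have qd : q`_d.+1 = p`_d.
  by rewrite qc /= [p`_d.+1]nth_default ?sp // mul0r subr0.
have qle : forall i, (i < d.+1)%N -> q`_i <= 0.
  move=> [|i] hi; rewrite qc /=.
    by rewrite sub0r oppr_le0 mulr_ge0.
  by rewrite subr_le0 mulrC; apply: prat.
have pd : 0 < p`_d.
  rewrite lt_def pge andbT; rewrite -/d.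
  by move: p0; rewrite -lead_coef_eq0 lead_coefE.
have hq : forall x, q.[x] = \sum_(i < d.+1) q`_i * x ^+ i + p`_d * x ^+ d.+1.
  by move=> x; rewrite horner_coef sq big_ord_recr /= qd.
have pt : 0 < p.[t].
  rewrite horner_coef sp big_ord_recr /=.
  have h1 : 0 < p`_d * t ^+ d by rewrite mulr_gt0 // exprn_gt0.
  apply: lt_le_trans h1 _; rewrite lerDr; apply: sumr_ge0 => i _.
  by rewrite mulr_ge0 // exprn_ge0 // ltW.
have qz : q.[z] = 0 by rewrite /q hornerM pz mul0r.
have qt : 0 < q.[t] by rewrite /q hornerM hornerXsubC mulr_gt0 // subr_gt0.
rewrite hq in qz; rewrite hq in qt.
have n1 : p`_d * t ^+ d.+1 <= - \sum_(i < d.+1) q`_i * t ^+ i.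
  have E : p`_d * z ^+ d.+1 = - \sum_(i < d.+1) q`_i * z ^+ i.
    by apply/eqP; rewrite -addr_eq0 addrC qz.
  have := congr1 (fun x => `|x|) E; rewrite /= normrN normrM normrX (gtr0_norm pd) => ->.
  apply: le_trans (ler_norm_sum _ _ _) _.
  rewrite -sumrN; apply: ler_sum => i _.
  by rewrite normrM normrX ler0_norm ?qle // mulNr.
have qt' : - (\sum_(i < d.+1) q`_i * t ^+ i) < p`_d * t ^+ d.+1.
  by rewrite -subr_gt0 opprK addrC.
by have := lt_le_trans qt' n1; rewrite ltxx.
Qed.

End EKsec.

Unset Implicit Arguments.
Local Open Scope ring_scope.

Theorem theorem5 (n : nat) (T : finType) (e : rel T) (z : algC) :
  (0 < n)%N -> #|T| = n -> simple_graph e -> forest e ->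
  root (indep_poly algC e) z ->
  `|z| <= forest_bound n.
Proof.
move=> n0 cT [esym eirr] efor rz.
set p := indep_poly algC e in rz *.
have ic : forall k, indep_count e k = cnt e setT k.
  by move=> k; apply: eq_card => S; rewrite !inE subsetT.
have pc : forall k, p`_k = (cnt e setT k)%:R.
  move=> k; rewrite /p /indep_poly coef_poly -ic; case: ifP => // /negbT.
  by rewrite -leqNgt ic => h; rewrite cnt_big // cardsT.
have fb : forest_bound n = (g n)%:R.
  rewrite /forest_bound /g; case: n n0 {cT} => // m _.
  by case: odd; rewrite natrD natrX.
rewrite fb; apply: EK rz.
- by apply/eqP => p0; have := pc 0%N; rewrite p0 coef0 cnt0 => /eqP; rewrite eq_sym oner_eq0.
- by move=> i; rewrite pc ler0n.
- exact: ler0n.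
move=> i hi; rewrite !pc -natrM ler_nat.
have hd : hasind e setT i.
  have : p`_(size p).-1 != 0.
    rewrite -lead_coefE lead_coef_eq0; apply/eqP => p0; have := pc 0%N.
    by rewrite p0 coef0 cnt0 => /eqP; rewrite eq_sym oner_eq0.
  rewrite pc pnatr_eq0 -lt0n => /cnt_gt0 [S [SU iS cS]].
  by exists S; split=> //; rewrite cS.
by have := main_aux esym eirr efor (leqnn _) hd; rewrite cardsT cT.
Qed.
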